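(* In the general model with $N\ge 2$, let $b$ be differentiable and strictly concave and $c$ differentiable and strictly convex. Let $A^o$ denote aggregate abatement in the global social welfare optimum, characterized by $P\,b'(A^o)=c'(A^o/P)$ (all countries abate $a^o=A^o/P$ per capita), and let $\tau^o=P\,b'(A^o)$ be the uniform optimal carbon price. Consider the mixed-motives outcome $(a_1,\dots,a_N)$ in which country 1 maximizes global social welfare $W$ over $a_1$ and each country $j=2,\dots,N$ maximizes its own $u_j$ over $a_j$, all choices interior, i.e. $$P\,b'(A)=c'(a_1),\qquad P_j\,b'(A)=c'(a_j)\ (j=2,\dots,N),\qquad A=\sum_{j}P_ja_j.$$ Then country 1's carbon price $\tau_1=c'(a_1)=P\,b'(A)$ is strictly higher than the carbon price in the global social welfare optimum: $\tau_1>\tau^o$.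
   Context: General model: there are $N$ countries with populations $P_1,\dots,P_N>0$; $P=\sum_{j=1}^N P_j$. Country $i$ chooses per-capita abatement $a_i\in\mathbb{R}$; its total abatement is $A_i=P_ia_i$, aggregate abatement is $A=\sum_{j=1}^N P_ja_j$. The utility of a representative person in country $i$ is $u_i(a_1,\dots,a_N)=b(A)-c(a_i)$, where $b$ is the benefit function and $c$ the abatement cost function (identical across countries). Individuals do not internalize the externality, so to implement per-capita abatement $a_i$ the country must set a carbon price $\tau_i=c'(a_i)$. Global social welfare is $W(a_1,\dots,a_N)=\sum_{j=1}^N P_j u_j(a_1,\dots,a_N)$. *)

(* Defs.v *)
From Stdlib Require Import Reals.
Open Scope R_scope.

(* sum_{i=1}^{N} f i  (countries are indexed 1..N) *)
Definition sum1N (N : nat) (f : nat -> R) : R :=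
  match N with
  | O => 0
  | S _ => sum_f 1 N f
  end.

Definition strictly_concave (f : R -> R) : Prop :=
  forall x y t, x <> y -> 0 < t < 1 ->
    t * f x + (1 - t) * f y < f (t * x + (1 - t) * y).

Definition strictly_convex (f : R -> R) : Prop :=
  forall x y t, x <> y -> 0 < t < 1 ->
    f (t * x + (1 - t) * y) < t * f x + (1 - t) * f y.

(* Main.v *)
Require Import Defs.
From Stdlib Require Import Reals Lra Lia.
Open Scope R_scope.


Lemma chord_right f (Hc : strictly_convex f) x w h :
  x < w -> 0 < h -> h < w - x ->
  (f (x + h) - f x) / h < (f w - f x) / (w - x).
Proof.
  intros Hxw Hh Hhw.
  set (t := h / (w - x)).
  assert (Ht : 0 < t < 1).
  { unfold t; split. apply Rdiv_lt_0_compat; lra.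
    apply (Rmult_lt_reg_r (w - x)); [lra|]. field_simplify; lra. }
  assert (Hne : w <> x) by lra.
  pose proof (Hc w x t Hne Ht) as H.
  replace (t * w + (1 - t) * x) with (x + h) in H by (unfold t; field; lra).
  assert (H2 : f (x + h) - f x < t * (f w - f x)) by lra.
  apply (Rmult_lt_compat_r (/ h)) in H2; [|apply Rinv_0_lt_compat; lra].
  unfold Rdiv. replace ((f w - f x) * / (w - x)) with (t * (f w - f x) * / h)
    by (unfold t; field; lra). exact H2.
Qed.

Lemma chord_left f (Hc : strictly_convex f) w y k :
  w < y -> 0 < k -> k < y - w ->
  (f y - f w) / (y - w) < (f y - f (y - k)) / k.
Proof.
  intros Hxw Hh Hhw.
  set (t := k / (y - w)).
  assert (Ht : 0 < t < 1).
  { unfold t; split. apply Rdiv_lt_0_compat; lra.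
    apply (Rmult_lt_reg_r (y - w)); [lra|]. field_simplify; lra. }
  assert (Hne : w <> y) by lra.
  pose proof (Hc w y t Hne Ht) as H.
  replace (t * w + (1 - t) * y) with (y - k) in H by (unfold t; field; lra).
  assert (H2 : t * (f y - f w) < f y - f (y - k)) by lra.
  apply (Rmult_lt_compat_r (/ k)) in H2; [|apply Rinv_0_lt_compat; lra].
  unfold Rdiv. replace ((f y - f w) * / (y - w)) with (t * (f y - f w) * / k)
    by (unfold t; field; lra). exact H2.
Qed.

Lemma deriv_le_chord f f' (Hd : forall x, derivable_pt_lim f x (f' x))
  (Hc : strictly_convex f) x w : x < w -> f' x <= (f w - f x) / (w - x).
Proof.
  intros Hxw. apply Rnot_lt_le; intro Hlt.
  set (S := (f w - f x) / (w - x)) in *.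
  destruct (Hd x (f' x - S) ltac:(lra)) as [d Hdel].
  pose proof (cond_pos d) as Hd0.
  set (h := Rmin (d / 2) ((w - x) / 2)).
  assert (Hh0 : 0 < h) by (apply Rmin_glb_lt; lra).
  assert (Hh1 : h <= d / 2) by apply Rmin_l.
  assert (Hh2 : h <= (w - x) / 2) by apply Rmin_r.
  specialize (Hdel h ltac:(lra) ltac:(rewrite Rabs_pos_eq; lra)).
  apply Rabs_def2 in Hdel.
  pose proof (chord_right f Hc x w h Hxw Hh0 ltac:(lra)). fold S in H. lra.
Qed.

Lemma deriv_ge_chord f f' (Hd : forall x, derivable_pt_lim f x (f' x))
  (Hc : strictly_convex f) w y : w < y -> (f y - f w) / (y - w) <= f' y.
Proof.
  intros Hxw. apply Rnot_lt_le; intro Hlt.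
  set (S := (f y - f w) / (y - w)) in *.
  destruct (Hd y (S - f' y) ltac:(lra)) as [d Hdel].
  pose proof (cond_pos d) as Hd0.
  set (k := Rmin (d / 2) ((y - w) / 2)).
  assert (Hh0 : 0 < k) by (apply Rmin_glb_lt; lra).
  assert (Hh1 : k <= d / 2) by apply Rmin_l.
  assert (Hh2 : k <= (y - w) / 2) by apply Rmin_r.
  specialize (Hdel (- k) ltac:(lra) ltac:(rewrite Rabs_Ropp, Rabs_pos_eq; lra)).
  apply Rabs_def2 in Hdel.
  replace ((f (y + - k) - f y) / - k) with ((f y - f (y - k)) / k) in Hdel
    by (replace (y + - k) with (y - k) by ring; field; lra).
  pose proof (chord_left f Hc w y k Hxw Hh0 ltac:(lra)). fold S in H. lra.
Qed.

Lemma deriv_strict_mono f f' (Hd : forall x, derivable_pt_lim f x (f' x))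
  (Hc : strictly_convex f) x y : x < y -> f' x < f' y.
Proof.
  intros Hxy. set (z := (x + y) / 2).
  pose proof (deriv_le_chord f f' Hd Hc x z ltac:(unfold z; lra)) as H1.
  pose proof (deriv_ge_chord f f' Hd Hc z y ltac:(unfold z; lra)) as H2.
  pose proof (Hc x y (1/2) ltac:(lra) ltac:(lra)) as H3.
  replace (1 / 2 * x + (1 - 1 / 2) * y) with z in H3 by (unfold z; field).
  assert (Hm : (f z - f x) / (z - x) < (f y - f z) / (y - z)).
  { replace (z - x) with ((y - x) / 2) by (unfold z; field).
    replace (y - z) with ((y - x) / 2) by (unfold z; field).
    unfold Rdiv at 1 3. apply Rmult_lt_compat_r.
    apply Rinv_0_lt_compat; lra. lra. }
  lra.
Qed.
Lemma sum_pos (g : nat -> R) n : (forall k, (k <= n)%nat -> 0 < g k) -> 0 < sum_f_R0 g n.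
Proof.
  induction n; intros H; simpl. apply H; lia.
  assert (0 < sum_f_R0 g n) by (apply IHn; intros; apply H; lia).
  assert (0 < g (S n)) by (apply H; lia). lra.
Qed.

Lemma sum_gt_term (g : nat -> R) n : (forall k, (k <= n)%nat -> 0 < g k) ->
  forall i, (1 <= i <= n)%nat -> g i < sum_f_R0 g n.
Proof.
  induction n; intros H i Hi. lia. simpl.
  destruct (Nat.eq_dec i (S n)) as [->|Hne].
  - assert (0 < sum_f_R0 g n) by (apply sum_pos; intros; apply H; lia). lra.
  - assert (g i < sum_f_R0 g n) by (apply IHn; [intros; apply H; lia | lia]).
    assert (0 < g (S n)) by (apply H; lia). lra.
Qed.

Lemma sum1N_eq N f : (1 <= N)%nat -> sum1N N f = sum_f_R0 (fun k => f (S k)) (N - 1).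
Proof.
  intros HN. destruct N; [lia|]. unfold sum1N, sum_f.
  apply sum_eq. intros i _. f_equal. lia.
Qed.

Lemma convex_of_concave b (H : strictly_concave b) : strictly_convex (fun x => - b x).
Proof. intros x y t Hxy Ht. specialize (H x y t Hxy Ht). lra. Qed.

Theorem proposition3
  (N : nat) (HN : (2 <= N)%nat)
  (Pop : nat -> R) (HPpos : forall i, (1 <= i <= N)%nat -> 0 < Pop i)
  (b b' c c' : R -> R)
  (Hb' : forall x, derivable_pt_lim b x (b' x))
  (Hc' : forall x, derivable_pt_lim c x (c' x))
  (Hbconc : strictly_concave b)
  (Hcconv : strictly_convex c)
  (Hbinc : forall x, 0 < b' x)
  (Ao : R)
  (HAo : sum1N N Pop * b' Ao = c' (Ao / sum1N N Pop))
  (a : nat -> R) (A : R)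
  (HA : A = sum1N N (fun j => Pop j * a j))
  (H1 : sum1N N Pop * b' A = c' (a 1%nat))
  (Hj : forall j, (2 <= j <= N)%nat -> Pop j * b' A = c' (a j)) :
  c' (a 1%nat) > sum1N N Pop * b' Ao.
Proof.
  assert (Hcm : forall x y, x < y -> c' x < c' y)
    by (intros; eapply deriv_strict_mono; eauto).
  assert (Hbm : forall x y, x < y -> b' y < b' x).
  { intros x y Hxy.
    assert (Hd : forall x, derivable_pt_lim (fun x => - b x) x ((fun x => - b' x) x))
      by (intros z; apply (derivable_pt_lim_opp b z (b' z)); auto).
    pose proof (deriv_strict_mono _ _ Hd (convex_of_concave b Hbconc) x y Hxy).
    simpl in H. lra. }
  set (P := sum1N N Pop) in *.
  assert (HPeq : P = sum_f_R0 (fun k => Pop (S k)) (N - 1)) by (apply sum1N_eq; lia).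
  assert (HPp : 0 < P).
  { rewrite HPeq. apply sum_pos. intros; apply HPpos; lia. }
  assert (HPj : forall j, (2 <= j <= N)%nat -> Pop j < P).
  { intros j Hj2. rewrite HPeq.
    replace j with (S (j - 1)) by lia.
    apply (sum_gt_term (fun k => Pop (S k))). intros; apply HPpos; lia. lia. }
  set (ao := Ao / P) in *.
  assert (HAoeq : Ao = P * ao) by (unfold ao; field; lra).
  rewrite <- H1. apply Rmult_gt_compat_l; [lra|].
  destruct (Rlt_or_le A Ao) as [Hlt|Hle]; [apply Hbm; exact Hlt|].
  exfalso.
  assert (Hb1 : b' A <= b' Ao).
  { destruct (Req_dec A Ao) as [->|Hne]; [lra|]. left; apply Hbm; lra. }
  assert (Ha1 : a 1%nat <= ao).
  { apply Rnot_lt_le; intro Hc. apply Hcm in Hc.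
    pose proof (Rmult_le_compat_l P _ _ (Rlt_le _ _ HPp) Hb1). lra. }
  assert (Haj : forall j, (2 <= j <= N)%nat -> a j < ao).
  { intros j Hj2. apply Rnot_le_lt; intro Hc.
    assert (c' ao <= c' (a j)) by (destruct Hc as [Hc|Hc]; [left; apply Hcm; exact Hc| rewrite Hc; lra]).
    pose proof (Hj j Hj2). pose proof (HPj j Hj2). pose proof (Hbinc A).
    pose proof (Rmult_le_compat_l P _ _ (Rlt_le _ _ HPp) Hb1).
    pose proof (Rmult_lt_compat_r (b' A) _ _ H3 H2). lra. }
  assert (HAlt : A < Ao).
  { rewrite HA, HAoeq, sum1N_eq by lia. rewrite HPeq, Rmult_comm, scal_sum.
    destruct N as [|[|M]]; [lia|lia|].
    replace (S (S M) - 1)%nat with (S M) by lia. rewrite !tech5.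
    apply Rplus_le_lt_compat.
    - apply sum_Rle. intros k Hk.
      destruct k.
      + apply Rmult_le_compat_l. left; apply HPpos; lia. exact Ha1.
      + left; apply Rmult_lt_compat_l. apply HPpos; lia. apply Haj; lia.
    - apply Rmult_lt_compat_l. apply HPpos; lia. apply Haj; lia. }
  lra.
Qed.
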